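(* Let $\mathcal S$ be a set of density matrices on finite-dimensional Hilbert spaces that is closed under tensor products and under permutations of tensor factors, and let $f$ be a real-valued function on pairs $(\rho,\sigma)$ with $\sigma\in\mathcal S$ and $\rho$ a density matrix on $\mathcal H_\sigma$, which is locally monotonic with respect to $\mathcal S$. Then $f(\rho,\sigma)\ge f(C[\rho],\sigma)$ for every $\sigma\in\mathcal S$, every density matrix $\rho$ on $\mathcal H_\sigma$ and every $C\in\mathcal C_\sigma$, and the same holds for $f'(\rho,\sigma):=f(\rho,\sigma)-f(\sigma,\sigma)$.
   Context: For $\sigma\in\mathcal S$, $\mathcal H_\sigma$ is the Hilbert space on which $\sigma$ acts and $\mathcal C_\sigma$ is the set of quantum channels $C$ on $\mathcal H_\sigma$ with $C[\sigma]=\sigma$. Closure under permutations means $\sigma\otimes\sigma'\in\mathcal S\Rightarrow\sigma'\otimes\sigma\in\mathcal S$. $f$ is locally monotonic with respect to $\mathcal S$ if for all $\sigma_1,\sigma_2\in\mathcal S$, all $C\in\mathcal C_{\sigma_1\otimes\sigma_2}$ and all density matrices $\rho_i$ on $\mathcal H_{\sigma_i}$: $f(\rho_1,\sigma_1)+f(\rho_2,\sigma_2)\ge f(\rho'_1,\sigma_1)+f(\rho'_2,\sigma_2)$, where $\rho'_1=\mathrm{Tr}_2[C(\rho_1\otimes\rho_2)]$, $\rho'_2=\mathrm{Tr}_1[C(\rho_1\otimes\rho_2)]$. *)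

(* Defs.v *)
From HB Require Import structures.
From mathcomp Require Import all_boot all_order all_algebra.
From mathcomp Require Export complex mxtens.
Set Implicit Arguments. Unset Strict Implicit. Unset Printing Implicit Defensive.
Import Order.TTheory GRing.Theory Num.Theory.
Local Open Scope ring_scope.

Section Quantum.
Variable R : rcfType.
Local Notation C := (R[i]).

Definition psd n (A : 'M[C]_n) : Prop :=
  forall v : 'rV[C]_n, 0 <= (v *m A *m map_mx Num.conj (v^T)) 0 0.

Definition density n (A : 'M[C]_n) : Prop := psd A /\ \tr A = 1.

(* block (i,j) of a matrix on C^k (x) C^n (index (i,a) |-> i*n+a, as in tensmx) *)
Definition blockmx k n (X : 'M[C]_(k * n)) (i j : 'I_k) : 'M[C]_n :=
  \matrix_(a, b) X (mxtens_index (i, a)) (mxtens_index (j, b)).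

Definition ampliate k n (Phi : 'M[C]_n -> 'M[C]_n) (X : 'M[C]_(k * n)) : 'M[C]_(k * n) :=
  \sum_(i < k) \sum_(j < k) (delta_mx i j : 'M[C]_k) *t Phi (blockmx X i j).

Definition linear_map n (Phi : 'M[C]_n -> 'M[C]_n) : Prop :=
  forall (a : C) (X Y : 'M[C]_n), Phi (a *: X + Y) = a *: Phi X + Phi Y.

Definition completely_positive n (Phi : 'M[C]_n -> 'M[C]_n) : Prop :=
  forall k (X : 'M[C]_(k * n)), psd X -> psd (ampliate Phi X).

Definition trace_preserving n (Phi : 'M[C]_n -> 'M[C]_n) : Prop :=
  forall X : 'M[C]_n, \tr (Phi X) = \tr X.

Definition channel n (Phi : 'M[C]_n -> 'M[C]_n) : Prop :=
  [/\ linear_map Phi, completely_positive Phi & trace_preserving Phi].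

Definition ptrace2 n1 n2 (Y : 'M[C]_(n1 * n2)) : 'M[C]_n1 :=
  \matrix_(i, j) \sum_(a < n2) Y (mxtens_index (i, a)) (mxtens_index (j, a)).
Definition ptrace1 n1 n2 (Y : 'M[C]_(n1 * n2)) : 'M[C]_n2 :=
  \matrix_(a, b) \sum_(i < n1) Y (mxtens_index (i, a)) (mxtens_index (i, b)).

Definition state_family (S : forall n, 'M[C]_n -> Prop) : Prop :=
  [/\ (forall n (s : 'M[C]_n), S n s -> density s),
      (forall n m (s : 'M[C]_n) (s' : 'M[C]_m), S n s -> S m s' -> S (n * m)%N (s *t s'))
    & (forall n m (s : 'M[C]_n) (s' : 'M[C]_m), S (n * m)%N (s *t s') -> S (m * n)%N (s' *t s))].

Definition locally_monotonic (S : forall n, 'M[C]_n -> Prop)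
    (f : forall n, 'M[C]_n -> 'M[C]_n -> R) : Prop :=
  forall n1 n2 (s1 : 'M[C]_n1) (s2 : 'M[C]_n2), S n1 s1 -> S n2 s2 ->
  forall Phi : 'M[C]_(n1 * n2) -> 'M[C]_(n1 * n2),
    channel Phi -> Phi (s1 *t s2) = s1 *t s2 ->
  forall (r1 : 'M[C]_n1) (r2 : 'M[C]_n2), density r1 -> density r2 ->
    f _ (ptrace2 (Phi (r1 *t r2))) s1 + f _ (ptrace1 (Phi (r1 *t r2))) s2
    <= f _ r1 s1 + f _ r2 s2.

End Quantum.

(* Main.v *)
Require Import Defs.
From HB Require Import structures.
From mathcomp Require Import all_boot all_order all_algebra.
From mathcomp Require Import complex mxtens.
Import Order.TTheory GRing.Theory Num.Theory.
Local Open Scope ring_scope.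
Set Implicit Arguments. Unset Strict Implicit.

Section Helpers.
Variable R : rcfType.
Local Notation C := (R[i]).

Definition relabel M N (g : 'I_M -> 'I_N) (X : 'M[C]_N) : 'M[C]_M :=
  \matrix_(p, q) X (g p) (g q).

Lemma psd_relabel M N (g : 'I_M -> 'I_N) (X : 'M[C]_N) :
  psd X -> psd (relabel g X).
Proof.
move=> hX v.
pose P : 'M[C]_(M, N) := \matrix_(p, j) (g p == j)%:R.
have -> : relabel g X = P *m X *m P^T.
  apply/matrixP => p q; rewrite !mxE.
  rewrite (bigD1 (g q)) //= big1 ?addr0.
    rewrite !mxE eqxx mulr1 (bigD1 (g p)) //= big1 ?addr0.
      by rewrite !mxE eqxx mul1r.
    by move=> j hj; rewrite !mxE eq_sym (negbTE hj) mul0r.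
  by move=> j hj; rewrite !mxE eq_sym (negbTE hj) mulr0.
have hP : map_mx Num.conj (P^T) = P^T.
  by apply/matrixP => i j; rewrite !mxE conjC_nat.
have := hX (v *m P).
by rewrite trmx_mul map_mxM hP !mulmxA.
Qed.

Lemma sum_idx n m (F : 'I_(n * m) -> C) :
  \sum_(k < n * m) F k = \sum_(a < n) \sum_(c < m) F (mxtens_index (a, c)).
Proof.
rewrite pair_big /=; apply: reindex => /=.
exists (@mxtens_unindex n m) => k _ /=; first by case: k => a c; rewrite mxtens_indexK.
exact: mxtens_unindexK.
Qed.

Lemma ampliateE k n (Phi : 'M[C]_n -> 'M[C]_n) (X : 'M[C]_(k * n)) i j a b :
  ampliate Phi X (mxtens_index (i, a)) (mxtens_index (j, b)) = Phi (blockmx X i j) a b.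
Proof.
rewrite /ampliate summxE (bigD1 i) //= summxE (bigD1 j) //= tensmxE mxE !eqxx mul1r.
rewrite big1 ?addr0; last by move=> j' hj; rewrite tensmxE mxE eqxx eq_sym (negbTE hj) mul0r.
rewrite big1 ?addr0 // => i' hi; rewrite summxE big1 // => j' _.
by rewrite tensmxE mxE eq_sym (negbTE hi) mul0r.
Qed.

Definition subb n m (Y : 'M[C]_(n * m)) (c d : 'I_m) : 'M[C]_n :=
  \matrix_(a, b) Y (mxtens_index (a, c)) (mxtens_index (b, d)).

Definition Psi n m (Phi : 'M[C]_n -> 'M[C]_n) (Y : 'M[C]_(n * m)) : 'M[C]_(n * m) :=
  \matrix_(p, q) Phi (subb Y (mxtens_unindex p).2 (mxtens_unindex q).2)
                     (mxtens_unindex p).1 (mxtens_unindex q).1.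

Lemma PsiE n m Phi (Y : 'M[C]_(n * m)) a b c d :
  Psi Phi Y (mxtens_index (a, c)) (mxtens_index (b, d)) = Phi (subb Y c d) a b.
Proof. by rewrite mxE !mxtens_indexK. Qed.


Lemma lin0 n (Phi : 'M[C]_n -> 'M[C]_n) : linear_map Phi -> Phi 0 = 0.
Proof.
move=> hl; have := hl 1 0 0; rewrite !scale1r addr0 => h.
by apply/(addrI (Phi 0)); rewrite addr0 -h.
Qed.

Lemma linZ n (Phi : 'M[C]_n -> 'M[C]_n) : linear_map Phi ->
  forall a X, Phi (a *: X) = a *: Phi X.
Proof. by move=> hl a X; have := hl a X 0; rewrite (lin0 hl) !addr0. Qed.

Lemma Psi_channel n m (Phi : 'M[C]_n -> 'M[C]_n) : channel Phi -> channel (@Psi n m Phi).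
Proof.
case=> hl hcp htp; split.
- move=> a X Y; apply/matrixP => p q.
  case: p / (mxtens_indexP p) => a1 c; case: q / (mxtens_indexP q) => b1 d.
  rewrite PsiE.
  have -> : subb (a *: X + Y) c d = a *: subb X c d + subb Y c d.
    by apply/matrixP => i j; rewrite !mxE.
  by rewrite hl !mxE !mxtens_indexK.
- move=> k X hX.
  pose sig : 'I_((k * m) * n) -> 'I_(k * (n * m)) := fun P =>
    mxtens_index ((mxtens_unindex (mxtens_unindex P).1).1,
      mxtens_index ((mxtens_unindex P).2, (mxtens_unindex (mxtens_unindex P).1).2)).
  pose tau : 'I_(k * (n * m)) -> 'I_((k * m) * n) := fun P =>
    mxtens_index (mxtens_index ((mxtens_unindex P).1, (mxtens_unindex (mxtens_unindex P).2).2),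
      (mxtens_unindex (mxtens_unindex P).2).1).
  have -> : ampliate (@Psi n m Phi) X =
      relabel tau (ampliate Phi (relabel sig X)).
    apply/matrixP => P Q.
    case: P / (mxtens_indexP P) => i p; case: p / (mxtens_indexP p) => a c.
    case: Q / (mxtens_indexP Q) => j q; case: q / (mxtens_indexP q) => b d.
    rewrite ampliateE PsiE mxE /tau !mxtens_indexK /= ampliateE.
    congr (Phi _ a b); apply/matrixP => a' b'.
    by rewrite !mxE /sig !mxtens_indexK.
  exact/psd_relabel/hcp/psd_relabel.
- move=> Y; rewrite /mxtrace !sum_idx.
  under eq_bigr do under eq_bigr do rewrite PsiE.
  rewrite exchange_big /=; symmetry; rewrite exchange_big /=.
  apply: eq_bigr => c _; have := htp (subb Y c c).
  by rewrite /mxtrace => ->; apply: eq_bigr => a _; rewrite mxE.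
Qed.

End Helpers.

Section Tens.
Variable R : rcfType.
Local Notation C := (R[i]).

Lemma Psi_tens n m (Phi : 'M[C]_n -> 'M[C]_n) (A : 'M[C]_n) (B : 'M[C]_m) :
  linear_map Phi -> Psi Phi (A *t B) = Phi A *t B.
Proof.
move=> hl; apply/matrixP => p q.
case: p / (mxtens_indexP p) => a c; case: q / (mxtens_indexP q) => b d.
rewrite PsiE tensmxE.
have -> : subb (A *t B) c d = B c d *: A.
  by apply/matrixP => i j; rewrite !mxE !mxtens_indexK /= mulrC.
by rewrite (linZ hl) mxE mulrC.
Qed.

Lemma ptrace2_tens n m (A : 'M[C]_n) (B : 'M[C]_m) : ptrace2 (A *t B) = \tr B *: A.
Proof.
apply/matrixP => i j; rewrite !mxE /mxtrace mulr_suml; apply: eq_bigr => a _.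
by rewrite tensmxE mulrC.
Qed.

Lemma ptrace1_tens n m (A : 'M[C]_n) (B : 'M[C]_m) : ptrace1 (A *t B) = \tr A *: B.
Proof.
apply/matrixP => i j; rewrite !mxE /mxtrace mulr_suml; apply: eq_bigr => a _.
by rewrite tensmxE.
Qed.

End Tens.

Theorem lemma35 (R : rcfType) (S : forall n, 'M[R[i]]_n -> Prop)
    (f : forall n, 'M[R[i]]_n -> 'M[R[i]]_n -> R) :
  state_family S -> locally_monotonic S f ->
  forall n (s : 'M[R[i]]_n), S n s ->
  forall rho : 'M[R[i]]_n, density rho ->
  forall Phi : 'M[R[i]]_n -> 'M[R[i]]_n, channel Phi -> Phi s = s ->
    f n (Phi rho) s <= f n rho s /\
    f n (Phi rho) s - f n s s <= f n rho s - f n s s.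
Proof.
move=> [hden _ _] hmon n s hs rho hrho Phi hPhi hfix.
have hds := hden _ _ hs.
have hch := @Psi_channel R n n Phi hPhi.
case: hPhi => hl _ htp.
have key := hmon n n s s hs hs _ hch.
have hfix2 : Psi Phi (s *t s) = s *t s by rewrite Psi_tens // hfix.
have := key hfix2 rho s hrho hds.
rewrite Psi_tens // ptrace2_tens ptrace1_tens htp.
case: hrho => _ ->; case: hds => _ ->; rewrite !scale1r lerD2r => h.
by split => //; rewrite lerD2r.
Qed.
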